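(* Let $A\in M_n(\mathbb{C})$, $x\in\mathbb{C}S^n$, and let $B_r$ be a ball of radius $r>0$ centered at $x$ in $\mathbb{C}^n$. Then $f_A(\mathbb{C}S^n\cap B_r)$ is a convex subset of $\mathbb{C}$.
   Context: $\mathbb{C}S^n$ is the unit sphere of $\mathbb{C}^n$ and $f_A(y)=y^*Ay$. *)

(* Defs.v *)
From HB Require Import structures.
From mathcomp Require Import all_boot all_order all_algebra.
From mathcomp Require Import complex.
From mathcomp Require Import reals.
Set Implicit Arguments. Unset Strict Implicit. Unset Printing Implicit Defensive.
Import Order.TTheory GRing.Theory Num.Theory.
Local Open Scope ring_scope.

Definition vnorm (R : realType) (n : nat) (v : 'cV[R[i]]_n) : R[i] :=
  sqrtC (\sum_(k < n) `|v k 0| ^+ 2).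

Definition adjv (R : realType) (n : nat) (y : 'cV[R[i]]_n) : 'rV[R[i]]_n :=
  (map_mx Num.conj y)^T.

Definition fA (R : realType) (n : nat) (A : 'M[R[i]]_n) (y : 'cV[R[i]]_n) : R[i] :=
  (adjv y *m A *m y) 0 0.

Definition unit_sphere (R : realType) (n : nat) (y : 'cV[R[i]]_n) : Prop :=
  vnorm y = 1.

Definition cball (R : realType) (n : nat) (x : 'cV[R[i]]_n) (r : R) (y : 'cV[R[i]]_n) : Prop :=
  vnorm (y - x) < (r%:C)%C.

Definition convexC (R : realType) (S : R[i] -> Prop) : Prop :=
  forall a b : R[i], S a -> S b -> forall t : R, 0 <= t <= 1 ->
    S (((1 - t)%:C)%C * a + (t%:C)%C * b).

(* Main.v *)
From HB Require Import structures.
From mathcomp Require Import all_boot all_order all_algebra.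
From mathcomp Require Import complex.
From mathcomp Require Import reals.
Require Import Defs.
From mathcomp Require Import ring lra.
Import Order.TTheory GRing.Theory Num.Theory.
Local Open Scope ring_scope.

Section S.
Context {R : realType}.
Local Notation C := R[i].

Lemma conjE (z : C) : z^* = conjc z. Proof. by []. Qed.
Lemma conjR (x : R) : (x%:C)%C^* = x%:C%C. Proof. by rewrite conjE /= oppr0. Qed.

Lemma realCE (z : C) : z^* = z -> z = (complex.Re z)%:C%C.
Proof.
case: z => a b; rewrite conjE /= => -[] h; apply/eqP; rewrite eq_complex /= eqxx /=.
apply/eqP; lra.
Qed.

Lemma normC2 (z : C) : z * z^* = ((complex.Re z)^+2 + (complex.Im z)^+2)%:C%C.
Proof. case: z => a b; rewrite conjE /=; apply/eqP; rewrite eq_complex /=; apply/andP; split; apply/eqP; ring. Qed.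

Lemma factor2 (m1 m2 : R) (mu : C) : 0 <= m1 -> 0 <= m2 ->
  mu * mu^* = (m1 * m2)%:C%C ->
  exists al be : C, [/\ al^* * al = m1%:C%C, al^* * be = mu^* & be^* * be = m2%:C%C].
Proof.
move=> h1 h2.
have [->|m1n0] := eqVneq m1 0 => hm.
  have mu0 : mu = 0.
    apply/eqP; by rewrite -mul_conjC_eq0 hm mul0r.
  exists 0, (Num.sqrt m2)%:C%C; rewrite conjR mu0 conjC0 !mulr0 mul0r; split => //.
  by rewrite conjR -rmorphM /= -expr2 sqr_sqrtr.
have m1p : 0 < m1 by rewrite lt_neqAle eq_sym m1n0.
set s := Num.sqrt m1.
have s0 : s != 0 by rewrite sqrtr_eq0 -ltNge.
have sC0 : s%:C%C != 0 :> C by apply/eqP => -[]; apply/eqP.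
have ss : s * s = m1 by rewrite -expr2 sqr_sqrtr // ltW.
exists s%:C%C, (mu^* / s%:C%C); rewrite conjR; split.
- by rewrite -rmorphM /= ss.
- by rewrite mulrC divfK.
- rewrite rmorphM /= conjCK fmorphV /= conjR.
  rewrite mulrACA mulrC hm -rmorphV ?unitfE // -!rmorphM /= -invfM ss.
  by congr (_%:C)%C; field.
Qed.
Lemma real_core (t d1 d2 nd k ng E : R) :
  0 <= t <= 1 -> 0 < nd -> 0 <= ng < 1 -> k ^+ 2 <= 4 * ng * nd ->
  d1 + d2 + k = 0 ->
  exists rho : R, [/\ (1 - t + rho * d1) * (t + rho * d2) = rho ^+ 2 * nd,
     0 <= 1 - t + rho * d1, 0 <= t + rho * d2 & 0 <= rho * E].
Proof.
move=> /andP[t0 t1] nd0 /andP[ng0 ng1] hk hs.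
set A := d1 * d2 - nd.
have hA : A < 0.
  rewrite /A. have -> : d2 = - d1 - k by lra. have h1 : ng * nd < nd by nra. have h2 : 0 <= (2 * d1 + k) ^+ 2 by apply: sqr_ge0. nra.
set B := d1 * t + d2 * (1 - t).
set D := B ^+ 2 - 4 * A * (t * (1 - t)).
have ht : 0 <= t * (1 - t) by nra.
have hB := sqr_ge0 B.
have hAt : A * (t * (1 - t)) <= 0 by nra.
have hD : 0 <= D by rewrite /D; lra.
set s := Num.sqrt D.
have s0 : 0 <= s by rewrite sqrtr_ge0.
have s2 : s ^+ 2 = D by rewrite sqr_sqrtr.
have hBs : B ^+ 2 <= s ^+ 2 by rewrite s2 /D; lra.
have sB : B <= s /\ - B <= s by split; nra.
have Aneq : A != 0 by rewrite lt_eqF.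
pose sg : R := if 0 <= E then 1 else -1.
have sg2 : sg ^+ 2 = 1 by rewrite /sg; case: ifP => _; rewrite ?expr1n ?sqrrN ?expr1n.
pose rho := (- B - sg * s) / (2 * A).
have e : 2 * A * rho = - B - sg * s by rewrite /rho mulrC divfK // mulf_neq0 // pnatr_eq0.
have hq : A * rho ^+ 2 + B * rho + t * (1 - t) = 0.
  have h4 : 4 * A != 0 by rewrite mulf_neq0 // pnatr_eq0.
  apply: (mulfI h4).
  rewrite mulr0.
  have -> : 4 * A * (A * rho ^+ 2 + B * rho + t * (1 - t)) =
    (2 * A * rho) ^+ 2 + 2 * B * (2 * A * rho) + 4 * A * (t * (1 - t)) by ring.
  rewrite e.
  have -> : (- B - sg * s) ^+ 2 = B ^+ 2 + 2 * B * sg * s + sg ^+ 2 * s ^+ 2 by ring.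
  rewrite sg2 s2 /D; ring.
have hrE : 0 <= rho * E.
  move: e; rewrite /sg; case: ifP => hE e.
  - have : 0 <= rho by nra.
    nra.
  - have : rho <= 0 by nra.
    rewrite mulN1r in e. have hE' : E < 0 by rewrite ltNge hE. nra.
exists rho.
set m1 := 1 - t + rho * d1.
set m2 := t + rho * d2.
have hm : m1 * m2 = rho ^+ 2 * nd.
  rewrite /m1 /m2; move: hq; rewrite /A /B; nra.
have hsum : m1 + m2 + rho * k = 1 by rewrite /m1 /m2; nra.
have hk2 : (rho * k) ^+ 2 <= 4 * (m1 * m2).
  rewrite hm exprMn. have hk' : k ^+ 2 <= 4 * nd by nra. have hr2 := sqr_ge0 rho. nra.
have hmm : 0 <= m1 * m2 by rewrite hm mulr_ge0 ?sqr_ge0 // ltW.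
clearbody m1 m2.
have e1 : rho * k = 1 - m1 - m2 by lra.
rewrite e1 in hk2.
have h4 : 4 * (m1 * m2) <= (m1 + m2) ^+ 2 by have := sqr_ge0 (m1 - m2); nra.
split => //.
- rewrite leNgt; apply/negP => h1.
  have h2 : m2 <= 0 by nra.
  nra.
- rewrite leNgt; apply/negP => h1.
  have h2 : m1 <= 0 by nra.
  nra.
Qed.

Lemma cauchyC (g d : C) :
  (complex.Re (d^* * g + d * g^*))^+2 <=
    4 * complex.Re (g * g^*) * complex.Re (d * d^*).
Proof.
case: g => g1 g2; case: d => d1 d2; rewrite !conjE /=.
have := sqr_ge0 (g1 * d2 - g2 * d1). nra.
Qed.

Lemma nonneg_Re (z : C) : 0 <= complex.Re (z * z^*).
Proof. rewrite normC2 /=; nra. Qed.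

Lemma core (g a b p q u1 u2 : C) (t : R) :
  0 <= t <= 1 -> complex.Re (g * g^*) < 1 -> b != a ->
  exists al be : C, exists N : R,
   [/\ al^* * al + al^* * be * g + be^* * al * g^* + be^* * be = 1,
       al^* * al * a + al^* * be * p + be^* * al * q + be^* * be * b =
         (1 - t)%:C%C * a + t%:C%C * b,
       (al * u1 + be * u2) * (al * u1 + be * u2)^* = N%:C%C &
       (1 - t) * complex.Re (u1 * u1^*) + t * complex.Re (u2 * u2^*) <= N].
Proof.
move=> ht hg hba.
set w := b - a.
have w0 : w != 0 by rewrite subr_eq0.
set P := a * g - p.
set Q := a * g^* - q.
set S := Q * w^* - P^* * w.
pose dl := if S == 0 then 1 else S^*.
have dl0 : dl != 0.
  rewrite /dl; case: (S =P 0) => [_|/eqP hS]; by rewrite ?oner_eq0 ?conjC_eq0.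
have dlS : (dl * S)^* = dl * S.
  rewrite /dl; case: (S =P 0) => [->|_]; first by rewrite mulr0 conjC0.
  by rewrite rmorphM /= conjCK mulrC.
set kC := dl^* * g + dl * g^*.
have kCr : kC^* = kC by rewrite /kC rmorphD /= !rmorphM /= !conjCK addrC.
set k := complex.Re kC.
have kE : kC = k%:C%C by apply: realCE.
set X := dl^* * P + dl * Q.
set XC := X * w^* / (w * w^*).
have XCr : XC^* = XC.
  have h : (X * w^*)^* = X * w^*.
    apply/eqP; rewrite -subr_eq0; apply/eqP.
    have -> : (X * w^*)^* - X * w^* = (dl * S)^* - dl * S.
      rewrite /X /S /P /Q /w !(rmorphD, rmorphM, rmorphB, rmorphN) /= !conjCK; ring.
    by rewrite dlS subrr.
  by rewrite /XC rmorphM /= h fmorphV /= rmorphM /= conjCK [w^* * w]mulrC.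
set d2 := complex.Re XC.
have d2E : XC = d2%:C%C by apply: realCE.
set d1 := - d2 - k.
have wd2 : d2%:C%C * w = X.
  have wc0 : w^* != 0 by rewrite conjC_eq0.
  by rewrite -d2E /XC -!mulrA [w * _]mulrC invfM -!mulrA mulVf // mulr1 mulfV // mulr1.
have key : d1%:C%C * a + d2%:C%C * b + dl^* * p + dl * q = 0.
  have -> : d1%:C%C = - d2%:C%C - kC by rewrite kE /d1 rmorphB rmorphN.
  have -> : d2%:C%C * b = d2%:C%C * w + d2%:C%C * a by rewrite /w; ring.
  rewrite wd2 /X /kC /P /Q; ring.
set nd := complex.Re (dl * dl^*).
have ndE : dl * dl^* = nd%:C%C by apply: realCE; rewrite rmorphM /= conjCK mulrC.
have nd0 : 0 < nd.
  rewrite lt_neqAle nonneg_Re andbT; apply/eqP => h.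
  by move: dl0; rewrite -mul_conjC_eq0 ndE -h => /eqP; apply.
set ng := complex.Re (g * g^*).
set EC := d1%:C%C * (u1 * u1^*) + d2%:C%C * (u2 * u2^*) + dl * (u1 * u2^*) + dl^* * (u1^* * u2).
have ECr : EC^* = EC.
  rewrite /EC !(rmorphD, rmorphM) /= !conjR !conjCK; ring.
set E := complex.Re EC.
have EE : EC = E%:C%C by apply: realCE.
have [rho [hm hm1 hm2 hrE]] := @real_core t d1 d2 nd k ng E ht nd0
   (ltac:(by rewrite nonneg_Re hg) : 0 <= ng < 1) (cauchyC g dl)
   (ltac:(by rewrite /d1; ring) : d1 + d2 + k = 0).
set m1 := 1 - t + rho * d1 in hm hm1.
set m2 := t + rho * d2 in hm hm2.
pose mu := rho%:C%C * dl.
have hmu : mu * mu^* = (m1 * m2)%:C%C.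
  by rewrite /mu rmorphM /= conjR mulrACA ndE hm -!rmorphM /= expr2.
have [al [be [h1 h2 h3]]] := @factor2 m1 m2 mu hm1 hm2 hmu.
have h4 : be^* * al = mu by rewrite -[mu]conjCK -h2 rmorphM /= conjCK mulrC.
have m1E : m1%:C%C = 1 - t%:C%C + rho%:C%C * d1%:C%C by rewrite /m1 rmorphD rmorphB rmorph1 rmorphM.
have m2E : m2%:C%C = t%:C%C + rho%:C%C * d2%:C%C by rewrite /m2 rmorphD rmorphM.
exists al, be, ((1 - t) * complex.Re (u1 * u1^*) + t * complex.Re (u2 * u2^*) + rho * E).
split.
- rewrite h1 h2 h3 h4 m1E m2E /mu rmorphM /= conjR.
  have -> : d1%:C%C = - d2%:C%C - kC by rewrite kE /d1 rmorphB rmorphN.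
  rewrite /kC; ring.
- rewrite h1 h2 h3 h4 m1E m2E /mu rmorphM /= conjR.
  transitivity ((1 - t%:C%C) * a + t%:C%C * b + rho%:C%C * (d1%:C%C * a + d2%:C%C * b + dl^* * p + dl * q)).
    ring.
  by rewrite key mulr0 addr0 rmorphB rmorph1.
- have u1E : u1 * u1^* = (complex.Re (u1 * u1^*))%:C%C by apply: realCE; rewrite rmorphM /= conjCK mulrC.
  have u2E : u2 * u2^* = (complex.Re (u2 * u2^*))%:C%C by apply: realCE; rewrite rmorphM /= conjCK mulrC.
  rewrite !(rmorphD, rmorphM, rmorphB) /= rmorph1 -u1E -u2E -EE /EC.
  have h5 : al * al^* = m1%:C%C by rewrite mulrC h1.
  have h6 : be * be^* = m2%:C%C by rewrite mulrC h3.
  have h7 : al * be^* = mu by rewrite mulrC h4.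
  transitivity (al * al^* * (u1 * u1^*) + be * be^* * (u2 * u2^*) + al * be^* * (u1 * u2^*) + be * al^* * (u1^* * u2)).
    ring.
  rewrite h5 h6 h7 [be * _]mulrC h2 m1E m2E /mu rmorphM /= conjR; ring.
- by rewrite lerDl.
Qed.
End S.

Section V.
Context {R : realType}.
Context {n : nat}.
Local Notation C := R[i].
Implicit Types u v w : 'cV[C]_n.

Definition ip u v : C := (adjv u *m v) 0 0.

Lemma ipE u v : ip u v = \sum_k (u k 0)^* * v k 0.
Proof. by rewrite /ip /adjv mxE; apply: eq_bigr => k _; rewrite !mxE. Qed.

Lemma ipDr u v w : ip u (v + w) = ip u v + ip u w.
Proof. rewrite !ipE -big_split; apply: eq_bigr => k _; by rewrite !mxE mulrDr. Qed.
Lemma ipDl u v w : ip (v + w) u = ip v u + ip w u.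
Proof. rewrite !ipE -big_split; apply: eq_bigr => k _; by rewrite !mxE rmorphD mulrDl. Qed.
Lemma ipZr u v (c : C) : ip u (c *: v) = c * ip u v.
Proof. rewrite !ipE mulr_sumr; apply: eq_bigr => k _; by rewrite !mxE mulrCA. Qed.
Lemma ipZl u v (c : C) : ip (c *: v) u = c^* * ip v u.
Proof. rewrite !ipE mulr_sumr; apply: eq_bigr => k _; by rewrite !mxE rmorphM mulrA. Qed.
Lemma ipNr u v : ip u (- v) = - ip u v.
Proof. rewrite !ipE -sumrN; apply: eq_bigr => k _; by rewrite !mxE mulrN. Qed.
Lemma ipNl u v : ip (- v) u = - ip v u.
Proof. rewrite !ipE -sumrN; apply: eq_bigr => k _; by rewrite !mxE rmorphN mulNr. Qed.
Lemma ipJ u v : (ip u v)^* = ip v u.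
Proof. rewrite !ipE rmorph_sum; apply: eq_bigr => k _; rewrite /= rmorphM /= conjCK mulrC. by []. Qed.
Lemma ip_ge0 v : 0 <= ip v v.
Proof. rewrite ipE; apply: sumr_ge0 => k _; rewrite mulrC; exact: mul_conjC_ge0. Qed.
Lemma ip_eq0 v : ip v v = 0 -> v = 0.
Proof.
rewrite ipE => /psumr_eq0P h; apply/matrixP => k j.
rewrite (ord1 j) [RHS]mxE; apply/eqP; rewrite -mul_conjC_eq0.
have h0 : forall i : 'I_n, true -> 0 <= (v i 0)^* * v i 0.
  by move=> i _; rewrite mulrC mul_conjC_ge0.
by rewrite mulrC (h h0 k isT).
Qed.
Lemma vnormE v : vnorm v = sqrtC (ip v v).
Proof. by rewrite /vnorm ipE; congr sqrtC; apply: eq_bigr => k _; rewrite normCKC. Qed.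
Lemma fAE (A : 'M[C]_n) y : fA A y = ip y (A *m y).
Proof. by rewrite /fA /ip mulmxA. Qed.
End V.

Lemma real_fin (R : realType) (x1 x2 n1 n2 N t r : R) :
  0 <= t <= 1 -> 2 - 2 * x1 < r ^+ 2 -> 2 - 2 * x2 < r ^+ 2 ->
  x1 ^+ 2 <= n1 -> x2 ^+ 2 <= n2 -> (1 - t) * n1 + t * n2 <= N -> 0 <= N ->
  2 - 2 * Num.sqrt N < r ^+ 2.
Proof.
move=> /andP[t0 t1] h1 h2 h3 h4 h5 h6.
have s0 : 0 <= Num.sqrt N by rewrite sqrtr_ge0.
have s2 : Num.sqrt N ^+ 2 = N by rewrite sqr_sqrtr.
set s := Num.sqrt N in s0 s2 *.
set c := 1 - r ^+ 2 / 2.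
have hc : (2 - 2 * s < r ^+ 2) = (c < s) by apply/idP/idP; rewrite /c => h; lra.
rewrite hc.
have [cn|cp] := ltP c 0; first by lra.
have e1 : c < x1 by rewrite /c; lra.
have e2 : c < x2 by rewrite /c; lra.
have f1 : c ^+ 2 < n1 by nra.
have f2 : c ^+ 2 < n2 by nra.
have hN : c ^+ 2 < N.
  have g1 : 0 <= (1 - t) * (n1 - c ^+ 2) by apply: mulr_ge0; lra.
  have g2 : 0 <= t * (n2 - c ^+ 2) by apply: mulr_ge0; lra.
  have [tz|tnz] := eqVneq t 0.
    rewrite tz in h5; lra.
  have tp : 0 < t by rewrite lt_neqAle eq_sym tnz.
  have g3 : 0 < t * (n2 - c ^+ 2) by apply: mulr_gt0; lra.
  lra.
rewrite ltNge; apply/negP => hsc.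
have : s ^+ 2 <= c ^+ 2 by rewrite ler_sqr ?nnegrE.
lra.
Qed.

Lemma Re_norm (R : realType) (z : R[i]) : (complex.Re z)^+2 <= complex.Re (z * z^*).
Proof. rewrite normC2 /=; have := sqr_ge0 (complex.Im z); lra. Qed.

Section M.
Context {R : realType}.
Local Notation C := R[i].

Lemma unitE {n} {y : 'cV[C]_n} : unit_sphere y -> ip y y = 1.
Proof. by rewrite /unit_sphere vnormE => h; rewrite -(sqrtCK (ip y y)) h expr1n. Qed.

Lemma ballE {n} (x y : 'cV[C]_n) (r : R) : 0 < r ->
  cball x r y <-> ip (y - x) (y - x) < (r ^+ 2)%:C%C.
Proof.
move=> r0; rewrite /cball vnormE.
have rC : (r%:C%C : C) = sqrtC ((r ^+ 2)%:C%C).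
  by rewrite rmorphXn /= sqrCK // ler0c ltW.
rewrite rC ltr_sqrtC ?nnegrE ?ip_ge0 ?ler0c ?sqr_ge0 //.
Qed.

Lemma ipsub {n} (x y : 'cV[C]_n) : ip x x = 1 -> ip y y = 1 ->
  ip (y - x) (y - x) = ((2 - 2 * complex.Re (ip x y)))%:C%C.
Proof.
move=> hx hy.
rewrite ipDl !ipDr !ipNl !ipNr hx hy -(ipJ x y).
case: (ip x y) => a b; rewrite conjE /=; apply/eqP; rewrite eq_complex /=.
apply/andP; split; apply/eqP; ring.
Qed.
End M.

Theorem lemma2 (R : realType) (n : nat) (A : 'M[R[i]]_n) (x : 'cV[R[i]]_n) (r : R) :
  unit_sphere x -> 0 < r ->
  convexC (fun z : R[i] => exists y : 'cV[R[i]]_n,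
             [/\ unit_sphere y, cball x r y & z = fA A y]).
Proof.
move=> /unitE hx r0 z1 z2 [y1 [/unitE s1 b1 ->]] [y2 [s2' b2 ->]] t ht.
have s2 := unitE s2'.
have [eab|nab] := eqVneq (fA A y2) (fA A y1).
  exists y1; split => //; first by rewrite /unit_sphere vnormE s1 sqrtC1.
  by rewrite eab -mulrDl -rmorphD /= subrK rmorph1 mul1r.
set g := ip y1 y2.
have g21 : ip y2 y1 = g^* by rewrite ipJ.
have CS : ip (y2 - g *: y1) (y2 - g *: y1) = 1 - g * g^*.
  rewrite ipDl !ipDr !ipNl !ipNr !ipZl !ipZr s1 s2 g21 -/g; ring.
set ng := complex.Re (g * g^*).
have ngE : g * g^* = ng%:C%C by apply: realCE; rewrite rmorphM /= conjCK mulrC.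
have ng1 : ng < 1.
  have : 0 <= (1 - ng)%:C%C :> R[i].
    have -> : (1 - ng)%:C%C = 1 - g * g^* :> R[i].
      by rewrite ngE; apply/eqP; rewrite eq_complex /= subr0 !eqxx.
    by rewrite -CS ip_ge0.
  rewrite ler0c le_eqVlt subr_gt0 => /orP[|//].
  rewrite eq_sym subr_eq0 => /eqP ng1'.
  have : y2 - g *: y1 = 0 by apply: ip_eq0; rewrite CS ngE -ng1' rmorph1 subrr.
  move/eqP; rewrite subr_eq0 => /eqP y2E.
  move: nab; rewrite y2E !fAE -scalemxAr ipZl ipZr mulrA [g^* * g]mulrC ngE -ng1' rmorph1 mul1r.
  by rewrite eqxx.
have [al [be [N [hn hf hN hNb]]]] := core g (fA A y1) (fA A y2) (ip y1 (A *m y2)) (ip y2 (A *m y1)) (ip x y1) (ip x y2) t ht ng1 nab.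
set y := al *: y1 + be *: y2.
have yy : ip y y = 1.
  by rewrite -hn /y ipDl !ipDr !ipZl !ipZr s1 s2 g21 -/g; ring.
have fy : fA A y = (1 - t)%:C%C * fA A y1 + t%:C%C * fA A y2.
  move: hf; rewrite !fAE => <-; rewrite /y mulmxDr -!scalemxAr ipDl !ipDr !ipZl !ipZr; ring.
set v := ip x y.
have vE : v * v^* = N%:C%C.
  by rewrite -hN /v /y ipDr !ipZr.
have N0 : 0 <= N by rewrite -ler0c -vE mul_conjC_ge0.
set nv := Num.sqrt N.
pose ph : R[i] := if v == 0 then 1 else nv%:C%C / v.
have phv : ph * v = nv%:C%C.
  rewrite /ph; case: (v =P 0) => [v0|/eqP v0].
    move: vE; rewrite v0 mul0r => /(f_equal (@complex.Re _)) /= N00.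
    by rewrite mulr0 /nv -N00 sqrtr0; apply/eqP; rewrite eq_complex /= !eqxx.
  by rewrite divfK.
have phph : ph^* * ph = 1.
  rewrite /ph; case: (v =P 0) => [_|/eqP v0]; first by rewrite conjC1 mulr1.
  rewrite rmorphM /= conjR fmorphV /= mulrACA -invfM -rmorphM /= -expr2 sqr_sqrtr //.
  by rewrite [v^* * v]mulrC vE mulfV // -vE mulf_neq0 // conjC_eq0.
exists (ph *: y); split.
- by rewrite /unit_sphere vnormE ipZl ipZr mulrA phph mul1r yy sqrtC1.
- apply/ballE => //.
  have hy' : ip (ph *: y) (ph *: y) = 1 by rewrite ipZl ipZr mulrA phph mul1r yy.
  rewrite ipsub // ipZr phv /= ltcR.
  have e1 := ipsub _ _ hx s1.
  have e2 := ipsub _ _ hx s2.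
  move/(ballE _ _ _ r0): b1; rewrite e1 ltcR => b1.
  move/(ballE _ _ _ r0): b2; rewrite e2 ltcR => b2.
  exact: (@real_fin R _ _ _ _ _ _ _ ht b1 b2 (Re_norm _ _) (Re_norm _ _) hNb N0).
- by rewrite [fA A (ph *: y)]fAE -scalemxAr ipZl ipZr mulrA phph mul1r -fAE fy.
Qed.
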